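(* Let $(A,\leq,\cdot,/)$ be a right-residuated magma satisfying condition (N), and let $B\subseteq A$ be closed under $\sqcap$. The following are equivalent: (1) $(B,\sqcap)$ is a left normal band, i.e. an idempotent semigroup satisfying $x\sqcap y\sqcap z = x\sqcap z\sqcap y$; (2) $(B,\sqcap)$ is a semigroup (i.e. $\sqcap$ is associative on $B$); (3) $(B,\sqcap)$ satisfies, for all $x,y,z\in B$, the identities $x\sqcap(y\sqcap x)=x\sqcap y$ and $(x\sqcap(y\sqcap z))\sqcap z = x\sqcap (y\sqcap z)$.
   Context: Write $xy$ for $x\cdot y$; $\cdot$ binds more strongly than $/$, and $/$ binds more strongly than $\sqcap$, where $x\sqcap y := (x/y)y$. A right-residuated magma is a structure $(A,\leq,\cdot,/)$ where $(A,\leq)$ is a poset and $xy\leq z\iff x\leq z/y$ for all $x,y,z\in A$. Condition (N): for all $x,y\in A$, $x\leq y\iff x = y\sqcap x$. *)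

(* Defs.v *)
Definition right_residuated_magma {A : Type} (le : A -> A -> Prop)
  (mul rdiv : A -> A -> A) : Prop :=
  (forall x, le x x) /\
  (forall x y z, le x y -> le y z -> le x z) /\
  (forall x y, le x y -> le y x -> x = y) /\
  (forall x y z, le (mul x y) z <-> le x (rdiv z y)).

Definition sqcap {A : Type} (mul rdiv : A -> A -> A) (x y : A) : A :=
  mul (rdiv x y) y.

Definition condN {A : Type} (le : A -> A -> Prop) (mul rdiv : A -> A -> A) : Prop :=
  forall x y, le x y <-> x = sqcap mul rdiv y x.

Definition semigroup_on {A : Type} (B : A -> Prop) (m : A -> A -> A) : Prop :=
  forall x y z, B x -> B y -> B z -> m (m x y) z = m x (m y z).

Definition left_normal_band_on {A : Type} (B : A -> Prop) (m : A -> A -> A) : Prop :=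
  semigroup_on B m /\
  (forall x, B x -> m x x = x) /\
  (forall x y z, B x -> B y -> B z -> m (m x y) z = m (m x z) y).

Definition cond3 {A : Type} (B : A -> Prop) (m : A -> A -> A) : Prop :=
  (forall x y, B x -> B y -> m x (m y x) = m x y) /\
  (forall x y z, B x -> B y -> B z -> m (m x (m y z)) z = m x (m y z)).

(* Main.v *)
Require Import Defs.

Theorem mainTheorem3 (A : Type) (le : A -> A -> Prop) (mul rdiv : A -> A -> A)
  (HA : right_residuated_magma le mul rdiv) (HN : condN le mul rdiv)
  (B : A -> Prop)
  (HB : forall x y, B x -> B y -> B (sqcap mul rdiv x y)) :
  (left_normal_band_on B (sqcap mul rdiv) <-> semigroup_on B (sqcap mul rdiv)) /\
  (semigroup_on B (sqcap mul rdiv) <-> cond3 B (sqcap mul rdiv)).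
Proof.
  destruct HA as [Hrefl [Htrans [Hanti Hres]]].
  set (m := sqcap mul rdiv) in *.
  assert (F1 : forall x y, le (m x y) x).
  { intros x y. unfold m, sqcap. apply Hres. apply Hrefl. }
  assert (F2 : forall x y, le x y <-> x = m y x) by exact HN.
  assert (F4 : forall a x y, le (m a y) x -> le (m a y) (m x y)).
  { intros a x y H. unfold m, sqcap in *. apply Hres in H.
    apply Hres. eapply Htrans; [exact H|].
    apply Hres. apply Hrefl. }
  assert (F4' : forall u x y, m u y = u -> le u x -> le u (m x y)).
  { intros u x y Hu Hl. rewrite <- Hu. apply F4. rewrite Hu. exact Hl. }
  assert (F5 : forall a y, m (m a y) y = m a y).
  { intros a y. apply Hanti. apply F1. apply F4. apply Hrefl. }
  assert (Idem : forall x, m x x = x).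
  { intros x. symmetry. apply F2. apply Hrefl. }
  assert (S23 : semigroup_on B m -> cond3 B m).
  { intros Has. split.
    - intros x y Bx By.
      set (u := m x y). set (v := m x (m y x)).
      assert (Hv : v = m u x) by (unfold v, u; symmetry; apply Has; auto).
      apply Hanti.
      + rewrite Hv. apply F1.
      + apply F2. rewrite Hv.
        assert (Bu : B u) by (unfold u; auto).
        rewrite Has; auto.
        assert (E : m x u = u).
        { unfold u. rewrite <- Has; auto. rewrite Idem. reflexivity. }
        rewrite E. symmetry. apply Idem.
    - intros x y z Bx By Bz. rewrite Has; auto. rewrite F5. reflexivity. }
  assert (S32 : cond3 B m -> semigroup_on B m).
  { intros [H3a H3b].
    assert (T : forall u b c, B u -> B b -> B c -> m u (m b c) = u -> m u c = u).
    { intros u b c Bu Bb Bc Hu. rewrite <- Hu. apply H3b; auto. }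
    assert (L : forall u y z, B u -> B y -> B z -> m u (m y z) = u -> m u y = u).
    { intros u y z Bu By Bz Hu.
      rewrite <- (H3a y z By Bz) in Hu.
      assert (Hu2 : m u (m z y) = u) by (apply (T u y (m z y)); auto).
      apply (T u z y); auto. }
    assert (Tr : forall t b, B t -> B b -> m t b = t -> forall u, B u -> m u t = u -> m u b = u).
    { intros t b Bt Bb Ht u Bu Hu. rewrite <- Ht in Hu. apply (T u t b); auto. }
    assert (M1 : forall t y z, B t -> B y -> B z -> m t y = t -> m t z = t -> m t (m y z) = t).
    { intros t y z Bt By Bz Hy Hz.
      assert (E : m (m y z) t = m y t).
      { apply Hanti.
        - apply F4'. apply F5. eapply Htrans; apply F1.
        - apply F4'. apply F5.
          apply F4'. apply (Tr t z); auto. try apply F5. apply F1. }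
      rewrite <- H3a; auto. rewrite E. rewrite H3a; auto. }
    intros x y z Bx By Bz.
    apply Hanti.
    - apply F4'.
      + apply (M1 _ y z); auto.
        * assert (Ha : m (m (m x y) z) (m x y) = m (m x y) z).
          { rewrite <- (H3a (m x y) z); auto.
            all: try (apply (T _ z (m x y)); auto; apply F5). }
          apply (Tr (m x y) y); auto; apply F5.
      + eapply Htrans; apply F1.
    - assert (Hq : m (m x (m y z)) (m y z) = m x (m y z)) by apply F5.
      apply F4'.
      + apply (T _ y z); auto.
      + apply F4'.
        * apply (L _ y z); auto.
        * apply F1. }
  assert (S21 : semigroup_on B m -> left_normal_band_on B m).
  { intros Has. destruct (S23 Has) as [H3a _].
    assert (LR : forall x y z, B x -> B y -> B z -> m (m (m x y) z) y = m (m x y) z).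
    { intros x y z Bx By Bz. rewrite Has; auto. rewrite Has; auto.
      rewrite H3a; auto. rewrite <- Has; auto. }
    assert (Le : forall x y z, B x -> B y -> B z -> le (m (m x y) z) (m (m x z) y)).
    { intros x y z Bx By Bz. apply F4'. apply LR; auto.
      apply F4'. apply F5. eapply Htrans; apply F1. }
    split; [exact Has|]. split.
    - intros x _. apply Idem.
    - intros x y z Bx By Bz. apply Hanti; apply Le; auto. }
  split; split.
  - intros [H _]; exact H.
  - exact S21.
  - exact S23.
  - exact S32.
Qed.
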